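(* Let $\mathcal{E}$ be a right exact category and let $\mathcal{A}$ be a strongly right percolating subcategory of $\mathcal{E}$. Then the right multiplicative system $S_{\mathcal{A}}$ of weak isomorphisms is right weakly saturated.
   Context: A conflation category is an additive category with a class of kernel-cokernel pairs (conflations; kernel part = inflation, cokernel part = deflation) closed under isomorphism. It is right exact if $1_0$ is a deflation, deflations compose, and pullbacks of deflations along arbitrary morphisms exist and are deflations. A non-empty full subcategory $\mathcal{A}$ of $\mathcal{E}$ is right percolating if: (P1) for every conflation $A'\rightarrowtail A\twoheadrightarrow A''$, $A\in\mathcal{A}$ iff $A',A''\in\mathcal{A}$; (P2) every morphism $C\to A$ with $A\in\mathcal{A}$ factors as a deflation $C\twoheadrightarrow A'$ with $A'\in\mathcal{A}$ followed by a morphism $A'\to A$; (P3) for an inflation $C\rightarrowtail D$ and a deflation $C\twoheadrightarrow A$ with $A\in\mathcal{A}$, the pushout exists and the induced maps $A\to P$, $D\to P$ are an inflation and a deflation; (P4) for every inflation $A\rightarrowtail X$ and deflation $X\twoheadrightarrow B$ with $A,B\in\mathcal{A}$ there are $A',B'\in\mathcal{A}$, deflations $A\twoheadrightarrow A'$, $X\twoheadrightarrow B'$, an inflation $A'\rightarrowtail B'$ and a morphism $B'\to B$ with $A\rightarrowtail X\twoheadrightarrow B'$ equal to $A\twoheadrightarrow A'\rightarrowtail B'$ and $X\twoheadrightarrow B$ equal to $X\twoheadrightarrow B'\to B$. It is strongly right percolating if moreover the morphism $A'\to A$ in (P2) can always be chosen to be a monomorphism. An $\mathcal{A}^{-1}$-inflation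 is an inflation with cokernel in $\mathcal{A}$, an $\mathcal{A}^{-1}$-deflation a deflation with kernel in $\mathcal{A}$; $S_{\mathcal{A}}$ is the class of finite composites of these (it is a right multiplicative system). With $Q\colon\mathcal{E}\to S_{\mathcal{A}}^{-1}\mathcal{E}$ the localization functor, $S_{\mathcal{A}}$ is right weakly saturated if for every morphism $f$ of $\mathcal{E}$ with $Q(f)$ an isomorphism there exists $s\in S_{\mathcal{A}}$ with $f\circ s\in S_{\mathcal{A}}$. *)

(* Defs.v *)
From HB Require Import structures.
From mathcomp Require Import all_boot all_algebra.
Set Implicit Arguments. Unset Strict Implicit. Unset Printing Implicit Defensive.
Import GRing.Theory.
Local Open Scope ring_scope.

Record Category := {
  cOb :> Type;
  cHom : cOb -> cOb -> Type;
  cid : forall A, cHom A A;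
  ccomp : forall A B C, cHom B C -> cHom A B -> cHom A C;
  ccomp_assoc : forall A B C D (h : cHom C D) (g : cHom B C) (f : cHom A B),
      ccomp h (ccomp g f) = ccomp (ccomp h g) f;
  ccomp_id_l : forall A B (f : cHom A B), ccomp (cid B) f = f;
  ccomp_id_r : forall A B (f : cHom A B), ccomp f (cid A) = f }.
Arguments ccomp {c A B C}.
Arguments cid {c}.

Definition c_is_iso (D : Category) (A B : D) (f : cHom A B) : Prop :=
  exists g : cHom B A, ccomp g f = cid A /\ ccomp f g = cid B.

Record AddCat := {
  Ob :> Type;
  Hom : Ob -> Ob -> zmodType;
  idm : forall A, Hom A A;
  comp : forall A B C, Hom B C -> Hom A B -> Hom A C;
  comp_assoc : forall A B C D (h : Hom C D) (g : Hom B C) (f : Hom A B),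
      comp h (comp g f) = comp (comp h g) f;
  comp_id_l : forall A B (f : Hom A B), comp (idm B) f = f;
  comp_id_r : forall A B (f : Hom A B), comp f (idm A) = f;
  comp_addl : forall A B C (g g' : Hom B C) (f : Hom A B),
      comp (g + g') f = comp g f + comp g' f;
  comp_addr : forall A B C (g : Hom B C) (f f' : Hom A B),
      comp g (f + f') = comp g f + comp g f';
  zero_ob : Ob;
  zero_ob_id : idm zero_ob = 0;
  biprod_ex : forall A B, exists (P : Ob) (i1 : Hom A P) (i2 : Hom B P)
      (p1 : Hom P A) (p2 : Hom P B),
      [/\ comp p1 i1 = idm A, comp p2 i2 = idm B, comp p1 i2 = 0, comp p2 i1 = 0
        & comp i1 p1 + comp i2 p2 = idm P] }.
Arguments comp {a A B C}.
Arguments idm {a}.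
Notation "g \o' f" := (comp g f) (at level 50, left associativity).

Section Basic.
Variable E : AddCat.

Definition is_iso (A B : E) (f : Hom A B) : Prop :=
  exists g : Hom B A, g \o' f = idm A /\ f \o' g = idm B.

Definition is_mono (A B : E) (f : Hom A B) : Prop :=
  forall X (u v : Hom X A), f \o' u = f \o' v -> u = v.

Definition is_kernel (A B C : E) (i : Hom A B) (p : Hom B C) : Prop :=
  p \o' i = 0 /\
  forall X (g : Hom X B), p \o' g = 0 -> exists! h : Hom X A, i \o' h = g.

Definition is_cokernel (A B C : E) (i : Hom A B) (p : Hom B C) : Prop :=
  p \o' i = 0 /\
  forall X (g : Hom B X), g \o' i = 0 -> exists! h : Hom C X, h \o' p = g.

Definition kernel_cokernel_pair (A B C : E) (i : Hom A B) (p : Hom B C) : Prop :=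
  is_kernel i p /\ is_cokernel i p.

Definition is_pullback (B C C' P : E) (p : Hom B C) (f : Hom C' C)
    (p' : Hom P C') (f' : Hom P B) : Prop :=
  p \o' f' = f \o' p' /\
  forall X (u : Hom X B) (v : Hom X C'), p \o' u = f \o' v ->
    exists! h : Hom X P, f' \o' h = u /\ p' \o' h = v.

Definition is_pushout (C D A P : E) (u : Hom C D) (v : Hom C A)
    (u' : Hom A P) (v' : Hom D P) : Prop :=
  v' \o' u = u' \o' v /\
  forall X (x : Hom D X) (y : Hom A X), x \o' u = y \o' v ->
    exists! h : Hom P X, h \o' v' = x /\ h \o' u' = y.
End Basic.

Record ConflCat := {
  cE :> AddCat;
  confl : forall A B C : cE, Hom A B -> Hom B C -> Prop;
  confl_kc : forall A B C (i : Hom A B) (p : Hom B C),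
      confl i p -> kernel_cokernel_pair i p;
  confl_iso : forall A B C A' B' C' (i : Hom A B) (p : Hom B C)
      (i' : Hom A' B') (p' : Hom B' C') (a : Hom A A') (b : Hom B B') (c : Hom C C'),
      confl i p -> is_iso a -> is_iso b -> is_iso c ->
      i' \o' a = b \o' i -> p' \o' b = c \o' p -> confl i' p' }.

Section Conflations.
Variable E : ConflCat.

Definition inflation (A B : E) (i : Hom A B) : Prop :=
  exists (C : E) (p : Hom B C), confl i p.
Definition deflation (B C : E) (p : Hom B C) : Prop :=
  exists (A : E) (i : Hom A B), confl i p.

Definition right_exact : Prop :=
  [/\ deflation (idm (zero_ob E)),
      (forall A B C (p : Hom A B) (q : Hom B C),
          deflation p -> deflation q -> deflation (q \o' p))
    & (forall B C C' (p : Hom B C) (f : Hom C' C), deflation p ->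
          exists (P : E) (p' : Hom P C') (f' : Hom P B),
            is_pullback p f p' f' /\ deflation p')].

Variable PA : E -> Prop.  (* the full subcategory A, given by its objects *)

Definition perc_P1 : Prop :=
  forall A' A A'' (i : Hom A' A) (p : Hom A A''), confl i p ->
    (PA A <-> PA A' /\ PA A'').

Definition perc_P2 : Prop :=
  forall C A (f : Hom C A), PA A ->
    exists (A' : E) (d : Hom C A') (g : Hom A' A),
      [/\ deflation d, PA A' & g \o' d = f].

Definition perc_P2_strong : Prop :=
  forall C A (f : Hom C A), PA A ->
    exists (A' : E) (d : Hom C A') (g : Hom A' A),
      [/\ deflation d, PA A', is_mono g & g \o' d = f].

Definition perc_P3 : Prop :=
  forall C D A (c : Hom C D) (q : Hom C A), inflation c -> deflation q -> PA A ->
    exists (P : E) (i' : Hom A P) (q' : Hom D P),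
      [/\ is_pushout c q i' q', inflation i' & deflation q'].

Definition perc_P4 : Prop :=
  forall A X B (i : Hom A X) (d : Hom X B), inflation i -> deflation d ->
    PA A -> PA B ->
    exists (A' B' : E) (a : Hom A A') (b : Hom X B') (j : Hom A' B') (m : Hom B' B),
      [/\ PA A', PA B', deflation a, deflation b & inflation j] /\
      b \o' i = j \o' a /\ m \o' b = d.

Definition right_percolating : Prop :=
  [/\ (exists A : E, PA A), perc_P1, perc_P2, perc_P3 & perc_P4].

Definition strongly_right_percolating : Prop :=
  right_percolating /\ perc_P2_strong.

Definition A_inflation (A B : E) (i : Hom A B) : Prop :=
  exists (C : E) (p : Hom B C), confl i p /\ PA C.
Definition A_deflation (B C : E) (p : Hom B C) : Prop :=
  exists (A : E) (i : Hom A B), confl i p /\ PA A.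

Inductive S_A : forall A B : E, Hom A B -> Prop :=
| S_A_infl : forall A B (i : Hom A B), A_inflation i -> S_A i
| S_A_defl : forall A B (p : Hom A B), A_deflation p -> S_A p
| S_A_comp : forall A B C (s : Hom A B) (t : Hom B C), S_A s -> S_A t -> S_A (t \o' s).

Record Functor (D : Category) := {
  fob : E -> D;
  fmap : forall A B : E, Hom A B -> cHom (fob A) (fob B);
  fmap_id : forall A, fmap (idm A) = cid (fob A);
  fmap_comp : forall A B C (g : Hom B C) (f : Hom A B),
      fmap (g \o' f) = ccomp (fmap g) (fmap f) }.

(* Q(f) is an isomorphism, Q : E -> S_A^{-1} E the localization functor.
   By the universal property of the localization, this holds iff F(f) is an
   isomorphism for every functor F that inverts every morphism of S_A. *)
Definition Q_inverts (A B : E) (f : Hom A B) : Prop :=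
  forall (D : Category) (F : Functor D),
    (forall X Y (s : Hom X Y), S_A s -> c_is_iso (fmap F s)) ->
    c_is_iso (fmap F f).

Definition right_weakly_saturated : Prop :=
  forall A B (f : Hom A B), Q_inverts f ->
    exists (X : E) (s : Hom X A), S_A s /\ S_A (f \o' s).
End Conflations.

(* Main.v *)
From HB Require Import structures.
From mathcomp Require Import all_boot all_algebra.
Require Import Defs.
From Stdlib Require Import ProofIrrelevance FunctionalExtensionality PropExtensionality ClassicalEpsilon.
Set Implicit Arguments. Unset Strict Implicit. Unset Printing Implicit Defensive.
Import GRing.Theory.
Local Open Scope ring_scope.

Section Dev.
Variable E : ConflCat.

Lemma comp0l (A B C : E) (f : Hom A B) : (0 : Hom B C) \o' f = 0.
Proof.
have H := comp_addl (0 : Hom B C) 0 f. rewrite addr0 in H.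
by move/(congr1 (fun y => y - ((0 : Hom B C) \o' f))): H; rewrite subrr addrK.
Qed.

Lemma comp0r (A B C : E) (g : Hom B C) : g \o' (0 : Hom A B) = 0.
Proof.
have H := comp_addr g (0 : Hom A B) 0. rewrite addr0 in H.
by move/(congr1 (fun y => y - (g \o' (0 : Hom A B)))): H; rewrite subrr addrK.
Qed.

Lemma compBr (A B C : E) (g : Hom B C) (a b : Hom A B) : g \o' (a - b) = (g \o' a) - (g \o' b).
Proof.
have H := comp_addr g b (a - b). rewrite addrC subrK in H.
by rewrite H addrAC subrr add0r.
Qed.

Lemma compBl (A B C : E) (a b : Hom B C) (f : Hom A B) : (a - b) \o' f = (a \o' f) - (b \o' f).
Proof.
have H := comp_addl b (a - b) f. rewrite addrC subrK in H.
by rewrite H addrAC subrr add0r.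
Qed.

Lemma to_zero (X : E) (f : Hom X (zero_ob E)) : f = 0.
Proof. by rewrite -(comp_id_l f) zero_ob_id comp0l. Qed.

Lemma from_zero (X : E) (f : Hom (zero_ob E) X) : f = 0.
Proof. by rewrite -(comp_id_r f) zero_ob_id comp0r. Qed.

Lemma kernel_mono (A B C : E) (i : Hom A B) (p : Hom B C) :
  is_kernel i p -> is_mono i.
Proof.
move=> [Hpi Hk] X u v Huv.
have H0 : p \o' (i \o' u) = 0 by rewrite comp_assoc Hpi comp0l.
have [h [_ Hu]] := Hk X (i \o' u) H0.
by rewrite -(Hu u erefl) (Hu v (esym Huv)).
Qed.

Lemma kernel_fact (A B C X : E) (i : Hom A B) (p : Hom B C) (g : Hom X B) :
  is_kernel i p -> p \o' g = 0 -> exists h, i \o' h = g.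
Proof. by move=> [_ Hk] /Hk [h [Hh _]]; exists h. Qed.

Lemma confl_kernel (A B C : E) (i : Hom A B) (p : Hom B C) : confl i p -> is_kernel i p.
Proof. by move/confl_kc => []. Qed.

Lemma confl_zero (A B C : E) (i : Hom A B) (p : Hom B C) : confl i p -> p \o' i = 0.
Proof. by move/confl_kernel => []. Qed.

Lemma confl_mono (A B C : E) (i : Hom A B) (p : Hom B C) : confl i p -> is_mono i.
Proof. by move/confl_kernel/kernel_mono. Qed.

Lemma iso_confl : right_exact E -> forall (X Y : E) (phi : Hom X Y), is_iso phi ->
  confl (0 : Hom (zero_ob E) X) phi.
Proof.
move=> [H0 _ Hpb] X Y phi [psi [Hpsi1 Hpsi2]].
have [P [p' [f' [[Hsq Hu] [K [j Hj]]]]]] := Hpb _ _ _ (idm (zero_ob E)) (0 : Hom Y (zero_ob E)) H0.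
have Hc : idm (zero_ob E) \o' (0 : Hom Y _) = (0 : Hom Y (zero_ob E)) \o' idm Y.
  by rewrite comp0r comp0l.
have := Hu Y (0 : Hom Y (zero_ob E)) (idm Y) Hc. move=> [h [[_ Hh] _]].
have Hhp : h \o' p' = idm P.
  have [h0 [_ Hu0]] := Hu P f' p' Hsq.
  rewrite -(Hu0 (h \o' p')); last first.
    by split; [rewrite (to_zero (f' \o' (h \o' p'))) (to_zero f') | rewrite comp_assoc Hh comp_id_l].
  by apply: Hu0; split; rewrite comp_id_r.
have Hj0 : j = 0.
  by rewrite -(comp_id_l j) -Hhp -comp_assoc (confl_zero Hj) comp0r.
have HK : idm K = 0.
  apply: (confl_mono Hj). by rewrite comp_id_r comp0r.
apply: (@confl_iso E _ _ _ _ _ _ j p' (0 : Hom (zero_ob E) X) phi (0 : Hom K (zero_ob E)) (psi \o' p') (idm Y) Hj).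
- by exists 0; split; rewrite comp0l ?HK ?zero_ob_id.
- exists (h \o' phi). split.
    by rewrite comp_assoc -(comp_assoc h phi psi) Hpsi2 comp_id_r Hhp.
  by rewrite comp_assoc -(comp_assoc psi p' h) Hh comp_id_r Hpsi1.
- by exists (idm Y); rewrite comp_id_l.
- by rewrite comp0l Hj0 comp0r.
- by rewrite comp_assoc Hpsi2 !comp_id_l.
Qed.

Variable PA : E -> Prop.

Lemma PA_zero : right_exact E -> right_percolating PA -> PA (zero_ob E).
Proof.
move=> HRE [[A0 HA0] HP1 _ _ _].
have Hc := iso_confl HRE (ex_intro _ (idm A0) (conj (comp_id_l _) (comp_id_l _))).
by case: (HP1 _ _ _ _ _ Hc) => H1 _; case: (H1 HA0).
Qed.

Lemma iso_S : right_exact E -> right_percolating PA ->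
  forall (X Y : E) (phi : Hom X Y), is_iso phi -> S_A PA phi.
Proof.
move=> HRE HRP X Y phi Hphi. apply: S_A_defl.
exists (zero_ob E), 0; split; [exact: iso_confl | exact: PA_zero].
Qed.

Lemma id_S : right_exact E -> right_percolating PA -> forall X : E, S_A PA (idm X).
Proof.
move=> HRE HRP X; apply: iso_S => //. by exists (idm X); rewrite comp_id_l.
Qed.


Lemma S_pb : right_exact E -> strongly_right_percolating PA ->
  forall (X Y : E) (s : Hom X Y), S_A PA s -> forall (Z : E) (k : Hom Z Y),
  exists (P : E) (s' : Hom P Z) (k' : Hom P X), is_pullback s k s' k' /\ S_A PA s'.
Proof.
move=> HRE [HRP HP2s] X Y s Hs; elim: Hs => {X Y s}.
- move=> A B i [C [q [Hiq HC]]] Z k.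
  have [A' [d [g [Hd HA' Hg Hgd]]]] := HP2s _ _ (q \o' k) HC.
  have [Z' [t Htd]] := Hd.
  have Hkt : q \o' (k \o' t) = 0.
    by rewrite comp_assoc -Hgd -comp_assoc (confl_zero Htd) comp0r.
  have [h Hh] := kernel_fact (confl_kernel Hiq) Hkt.
  exists Z', t, h; split; last by apply: S_A_infl; exists A', d.
  split; first by [].
  move=> W u v Huv.
  have Hdv : d \o' v = 0.
    apply: Hg. rewrite comp0r comp_assoc Hgd -comp_assoc -Huv comp_assoc (confl_zero Hiq) comp0l.
    by [].
  have [_ Hkd] := confl_kernel Htd.
  have [w [Htw Hw]] := Hkd W v Hdv.
  exists w; split.
    split; last exact Htw.
    apply: (confl_mono Hiq). by rewrite comp_assoc Hh -comp_assoc Htw Huv.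
  by move=> w' [_ Hw']; apply: Hw.
- move=> A B p [K [i [Hip HK]]] Z k.
  have [_ _ Hpb] := HRE.
  have Hdp : deflation p by exists K, i.
  have [P [p' [f' [[Hsq Hu] [K' [j Hj]]]]]] := Hpb _ _ _ p k Hdp.
  exists P, p', f'; split; first by split.
  apply: S_A_defl.
  have Hc0 : p \o' i = k \o' (0 : Hom K Z) by rewrite (confl_zero Hip) comp0r.
  have := Hu K i 0 Hc0; move=> [m [[Hm1 Hm2] _]].
  have [b' Hb'] := kernel_fact (confl_kernel Hj) Hm2.
  have Hfj : p \o' (f' \o' j) = 0.
    by rewrite comp_assoc Hsq -comp_assoc (confl_zero Hj) comp0r.
  have [a Ha] := kernel_fact (confl_kernel Hip) Hfj.
  have Hab : a \o' b' = idm K.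
    apply: (confl_mono Hip). by rewrite comp_assoc Ha -comp_assoc Hb' Hm1 comp_id_r.
  have Hma : m \o' a = j.
    have Hc1 : p \o' (f' \o' j) = k \o' (p' \o' j) by rewrite !comp_assoc Hsq.
    have := Hu K' (f' \o' j) (p' \o' j) Hc1; move=> [h0 [_ Hu0]].
    rewrite -(Hu0 (m \o' a)); last first.
      split; first by rewrite comp_assoc Hm1 Ha.
      by rewrite comp_assoc Hm2 comp0l (confl_zero Hj).
    by apply: Hu0.
  have Hba : b' \o' a = idm K'.
    apply: (confl_mono Hj). by rewrite comp_assoc Hb' Hma comp_id_r.
  exists K, (j \o' b'); split => //.
  apply: (@confl_iso E _ _ _ _ _ _ j p' (j \o' b') p' a (idm P) (idm Z) Hj).
  + by exists b'; split.
  + by exists (idm P); rewrite comp_id_l.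
  + by exists (idm Z); rewrite comp_id_l.
  + by rewrite -comp_assoc Hba comp_id_r comp_id_l.
  + by rewrite comp_id_r comp_id_l.
- move=> A B C s t Hs IHs Ht IHt Z k.
  have [P1 [t' [k1 [[Hsq1 Hu1] Ht']]]] := IHt Z k.
  have [P2 [s' [k2 [[Hsq2 Hu2] Hs']]]] := IHs P1 k1.
  exists P2, (t' \o' s'), k2; split; last exact: S_A_comp.
  split.
    by rewrite -comp_assoc Hsq2 comp_assoc Hsq1 -comp_assoc.
  move=> W u v Huv.
  have H1 : t \o' (s \o' u) = k \o' v by rewrite comp_assoc.
  have := Hu1 W (s \o' u) v H1; move=> [w1 [[Hw1a Hw1b] Hw1u]].
  have H2 : s \o' u = k1 \o' w1 by rewrite Hw1a.
  have := Hu2 W u w1 H2; move=> [w2 [[Hw2a Hw2b] Hw2u]].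
  exists w2; split.
    split => //. by rewrite -comp_assoc Hw2b.
  move=> w [Hwa Hwb]. apply: Hw2u; split => //.
  symmetry; apply: Hw1u; split.
    by rewrite comp_assoc -Hsq2 -comp_assoc Hwa.
  by rewrite comp_assoc.
Qed.

Lemma S_cancel : right_exact E -> strongly_right_percolating PA ->
  forall (X Y : E) (s : Hom X Y), S_A PA s -> forall (Z : E) (a b : Hom Z X),
  s \o' a = s \o' b -> exists (Z' : E) (u : Hom Z' Z), S_A PA u /\ a \o' u = b \o' u.
Proof.
move=> HRE [HRP HP2s] X Y s Hs; elim: Hs => {X Y s}.
- move=> A B i [C [q [Hiq HC]]] Z a b Hab.
  exists Z, (idm Z); split; first exact: id_S.
  by rewrite (confl_mono Hiq Hab).
- move=> A B p [K [i [Hip HK]]] Z a b Hab.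
  have H0 : p \o' (a - b) = 0 by rewrite compBr Hab subrr.
  have [c Hc] := kernel_fact (confl_kernel Hip) H0.
  have [A' [d [g [Hd HA' _ Hgd]]]] := HP2s _ _ c HK.
  have [Z' [t Htd]] := Hd.
  exists Z', t; split; first by apply: S_A_infl; exists A', d.
  apply/eqP; rewrite -subr_eq0 -compBl -Hc -Hgd -!comp_assoc (confl_zero Htd) !comp0r.
  by [].
- move=> A B C s t Hs IHs Ht IHt Z a b Hab.
  have H1 : t \o' (s \o' a) = t \o' (s \o' b) by rewrite !comp_assoc.
  have [Z1 [u1 [Hu1 E1]]] := IHt _ _ _ H1.
  have H2 : s \o' (a \o' u1) = s \o' (b \o' u1) by rewrite !comp_assoc.
  have [Z2 [u2 [Hu2 E2]]] := IHs _ _ _ H2.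
  exists Z2, (u1 \o' u2); split; first exact: S_A_comp.
  by rewrite !comp_assoc.
Qed.


Section Sieves.
Hypothesis HRE : right_exact E.
Hypothesis HSP : strongly_right_percolating PA.

Definition closed (Y : E) (V : forall X : E, Hom X Y -> Prop) : Prop :=
  (forall (X X' : E) (k : Hom X Y) (g : Hom X' X), V X k -> V X' (k \o' g)) /\
  (forall (X X' : E) (k : Hom X Y) (t : Hom X' X), S_A PA t -> V X' (k \o' t) -> V X k).

Definition Sv (Y : E) := {V : forall X : E, Hom X Y -> Prop | closed V}.

Lemma sv_ext (Y : E) (V W : Sv Y) : (forall X k, sval V X k <-> sval W X k) -> V = W.
Proof.
case: V => V HV; case: W => W HW /= H.
have eVW : V = W.
  apply: functional_extensionality_dep => X; apply: functional_extensionality => k.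
  apply: propositional_extensionality; exact: H.
subst W. f_equal. apply: proof_irrelevance.
Qed.

Lemma pb_closed (A B : E) (g : Hom A B) (V : Sv B) :
  closed (fun X (k : Hom X A) => sval V X (g \o' k)).
Proof.
case: V => V [HV1 HV2] /=; split.
- move=> X X' k h H. rewrite comp_assoc. exact: HV1.
- move=> X X' k t Ht H. apply: (HV2 _ _ _ t Ht). by rewrite -comp_assoc.
Qed.

Definition pb (A B : E) (g : Hom A B) (V : Sv B) : Sv A := exist _ _ (pb_closed g V).

Definition SvCat : Category :=
  @Build_Category E (fun X Y => Sv Y -> Sv X) (fun A x => x) (fun A B C g f => fun c => f (g c))
    (fun _ _ _ _ _ _ _ => erefl) (fun _ _ _ => erefl) (fun _ _ _ => erefl).

Lemma pb_id (A : E) : pb (idm A) = (fun x => x).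
Proof.
apply: functional_extensionality => V; apply: sv_ext => X k /=; by rewrite comp_id_l.
Qed.

Lemma pb_comp (A B C : E) (g : Hom B C) (f : Hom A B) : pb (g \o' f) = fun c => pb f (pb g c).
Proof.
apply: functional_extensionality => V; apply: sv_ext => X k /=; by rewrite comp_assoc.
Qed.

Definition SvF : Functor E SvCat :=
  @Build_Functor E SvCat (fun X => X) (fun A B g => pb g) pb_id pb_comp.

Definition bij (A B : E) (g : Hom A B) :=
  injective (pb g) /\ (forall U, exists V, pb g V = U).

Lemma iso_bij (A B : E) (g : Hom A B) : c_is_iso (fmap SvF g) -> bij g.
Proof.
move=> [h [H1 H2]]; split.
- move=> V W e. move: (equal_f H2 V) (equal_f H2 W) => /= <- <-. by rewrite e.
- move=> U. exists (h U). exact: (equal_f H1 U).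
Qed.

Lemma bij_iso (A B : E) (g : Hom A B) : bij g -> c_is_iso (fmap SvF g).
Proof.
move=> [Hinj Hsurj].
pose h U := proj1_sig (constructive_indefinite_description _ (Hsurj U)).
have Hh : forall U, pb g (h U) = U.
  move=> U; rewrite /h; case: (constructive_indefinite_description _ _) => //.
exists h; split.
- apply: functional_extensionality => U /=. exact: Hh.
- apply: functional_extensionality => V /=. apply: Hinj. exact: Hh.
Qed.

Lemma sieve_lemma (A B : E) (h : Hom A B) : injective (pb h) ->
  exists (Z : E) (x : Hom Z A) (t : Hom Z B), S_A PA t /\ h \o' x = t.
Proof.
move=> Hinj.
pose V := fun X (k : Hom X B) => exists (Z : E) (t : Hom Z X) (x : Hom Z A),
  S_A PA t /\ k \o' t = h \o' x.
have HV : closed V.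
  split.
  - move=> X X' k g [Z [t [x [Ht Hkt]]]].
    have [P [t' [g' [[Hsq _] Ht']]]] := S_pb HRE HSP Ht g.
    exists P, t', (x \o' g'); split => //.
    by rewrite -comp_assoc -Hsq comp_assoc Hkt -comp_assoc.
  - move=> X X' k t Ht [Z [t0 [x [Ht0 Hkt]]]].
    exists Z, (t \o' t0), x; split; first exact: S_A_comp.
    by rewrite comp_assoc.
pose T := fun X (k : Hom X B) => True.
have HT : closed T by split.
have e : pb h (exist _ V HV) = pb h (exist _ T HT).
  apply: sv_ext => X k /=; split => // _.
  exists X, (idm X), k; split; [exact: (id_S HRE (proj1 HSP)) | by rewrite comp_id_r].
have e' := Hinj _ _ e.
have HVB : V B (idm B).
  by have -> : V = T := f_equal (@proj1_sig _ _) e'.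
case: HVB => Z [t [x [Ht Htx]]]; exists Z, x, t; split => //.
by rewrite -Htx comp_id_l.
Qed.

Lemma S_bij (X Y : E) (s : Hom X Y) : S_A PA s -> bij s.
Proof.
move=> Hs; split.
- move=> V W e. apply: sv_ext => Z k.
  have [P [s' [k' [[Hsq _] Hs']]]] := S_pb HRE HSP Hs k.
  have eq : forall Q : Sv Y, sval Q Z k <-> sval (pb s Q) P k'.
    move=> [Q [HQ1 HQ2]] /=; split => H.
      rewrite Hsq. exact: HQ1.
    apply: (HQ2 _ _ _ s' Hs'); by rewrite -Hsq.
  split => H.
    apply/(eq W); rewrite -e; exact/(eq V).
  apply/(eq V); rewrite e; exact/(eq W).
- move=> U.
  pose V := fun Z (k : Hom Z Y) => exists (Z' : E) (t : Hom Z' Z) (h : Hom Z' X),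
    S_A PA t /\ k \o' t = s \o' h /\ sval U Z' h.
  have HV : closed V.
    split.
    + move=> Z Z' k g [W [t [h [Ht [Hkt HU]]]]].
      have [P [t' [g' [[Hsq _] Ht']]]] := S_pb HRE HSP Ht g.
      exists P, t', (h \o' g'); split => //; split.
        by rewrite -comp_assoc -Hsq comp_assoc Hkt -comp_assoc.
      by case: U HU {V} => U [HU1 HU2] /= HU; apply: HU1.
    + move=> Z Z' k t Ht [W [t0 [h [Ht0 [Hkt HU]]]]].
      exists W, (t \o' t0), h; split; first exact: S_A_comp.
      split => //. by rewrite comp_assoc.
  exists (exist _ V HV); apply: sv_ext => Z h /=; split.
  + move=> [W [t [h' [Ht [Hst HU]]]]].
    have Hst' : s \o' (h \o' t) = s \o' h' by rewrite comp_assoc.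
    have [W' [u [Hu Hequ]]] := S_cancel HRE HSP Hs Hst'.
    case: U HU {V HV} => U [HU1 HU2] /= HU.
    apply: (HU2 _ _ _ (t \o' u) (S_A_comp Hu Ht)).
    rewrite comp_assoc Hequ. exact: HU1.
  + move=> HU. exists Z, (idm Z), h; split; first exact: (id_S HRE (proj1 HSP)).
    split => //. by rewrite comp_id_r.
Qed.

Lemma main_W (A B : E) (f : Hom A B) : Q_inverts PA f ->
  exists (X : E) (s : Hom X A), S_A PA s /\ S_A PA (f \o' s).
Proof.
move=> HQ.
have Hfi : c_is_iso (fmap SvF f).
  apply: HQ => X Y s Hs. apply: bij_iso. exact: S_bij.
have [Hfinj Hfsurj] := iso_bij Hfi.
have [Z [x [t [Ht Hfx]]]] := sieve_lemma Hfinj.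
have [P [t' [f' [[Hsq Hu] Ht']]]] := S_pb HRE HSP Ht f.
have Hc : t \o' idm Z = f \o' x by rewrite comp_id_r Hfx.
have := Hu Z (idm Z) x Hc; move=> [sg [[Hsg1 Hsg2] _]].
have [Htinj Htsurj] := S_bij Ht.
have [Ht'inj Ht'surj] := S_bij Ht'.
have Hpbsq : forall V, pb f' (pb t V) = pb t' (pb f V).
  move=> V; apply: sv_ext => X k /=; by rewrite !comp_assoc Hsq.
have Hf'surj : forall U, exists V, pb f' V = U.
  move=> U. have [W1 HW1] := Ht'surj U. have [W2 HW2] := Hfsurj W1.
  exists (pb t W2). by rewrite Hpbsq HW2 HW1.
have Hsginj : injective (pb sg).
  move=> V1 V2 e. have [W1 HW1] := Hf'surj V1. have [W2 HW2] := Hf'surj V2.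
  have Hid : forall W, pb sg (pb f' W) = W.
    move=> W; apply: sv_ext => X k /=; by rewrite comp_assoc Hsg1 comp_id_l.
  rewrite -HW1 -HW2 !Hid in e. by rewrite -HW1 -HW2 e.
have [Z' [y [u [Hu' Hsy]]]] := sieve_lemma Hsginj.
have [P2 [p2 [f2 [[Hsq2 Hu2] Hp2]]]] := S_pb HRE HSP Hu' sg.
have Hc2 : u \o' idm Z' = sg \o' y by rewrite comp_id_r Hsy.
have := Hu2 Z' (idm Z') y Hc2; move=> [hh [[Hh1 Hh2] _]].
have Hsgmono : forall W (a b : Hom W Z), sg \o' a = sg \o' b -> a = b.
  move=> W a b e. by rewrite -(comp_id_l a) -(comp_id_l b) -Hsg1 -!comp_assoc e.
have Hyf2 : y \o' f2 = p2.
  apply: Hsgmono. by rewrite comp_assoc Hsy Hsq2.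
have Hhf2 : hh \o' f2 = idm P2.
  have := Hu2 P2 f2 p2 Hsq2; move=> [h0 [_ Hu0]].
  rewrite -(Hu0 (hh \o' f2)); last first.
    split; first by rewrite comp_assoc Hh1 comp_id_l.
    by rewrite comp_assoc Hh2 Hyf2.
  by apply: Hu0; split; rewrite comp_id_r.
have Hf2S : S_A PA f2.
  apply: (iso_S HRE (proj1 HSP)). by exists hh; split.
exists P2, (t' \o' (u \o' f2)); split.
  apply: S_A_comp => //. exact: S_A_comp.
have e1 : f' \o' (u \o' f2) = p2.
  by rewrite -Hsy -(comp_assoc sg y f2) comp_assoc Hsg1 comp_id_l Hyf2.
have -> : f \o' (t' \o' (u \o' f2)) = t \o' p2.
  by rewrite comp_assoc -Hsq -comp_assoc e1.
exact: S_A_comp Hp2 Ht.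
Qed.

End Sieves.
End Dev.

Theorem proposition5p6 (E : ConflCat) (PA : E -> Prop) :
  right_exact E -> strongly_right_percolating PA -> right_weakly_saturated PA.
Proof.
move=> HRE HSP A B f HQ. exact: (main_W HRE HSP HQ).
Qed.
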